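(* For every $d\ge 1$ there exists $\beta_d>0$ such that the following holds. Let $\Delta,\Delta'\subset\mathbb{R}^d$ be vertex sets of regular simplices of edge length $1$ with $\mathrm{diam}(\Delta\cup\Delta')\le 1+\beta$ for some $0\le\beta<\beta_d$. Then \[ \mathrm{dist}_H(\Delta,\Delta')\le (d+1)d^2\,\beta . \]
   Context: A regular simplex of edge length $1$ in $\mathbb{R}^d$ is (identified with) its vertex set: $d+1$ points at pairwise Euclidean distance exactly $1$. $\mathrm{diam}(A)=\sup_{x,y\in A}\|x-y\|_2$. For nonempty compact $A,B\subset\mathbb{R}^d$, the Hausdorff distance is $\mathrm{dist}_H(A,B)=\max\{\sup_{a\in A}\inf_{b\in B}\|a-b\|_2,\ \sup_{b\in B}\inf_{a\in A}\|a-b\|_2\}$. *)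

(* Defs.v *)
From mathcomp Require Import all_boot all_order all_algebra.
From mathcomp Require Import all_classical all_reals.
Set Implicit Arguments. Unset Strict Implicit. Unset Printing Implicit Defensive.
Import Order.TTheory GRing.Theory Num.Theory.
Local Open Scope ring_scope.
Local Open Scope classical_set_scope.

Definition edist {R : realType} {d : nat} (x y : 'rV[R]_d) : R :=
  Num.sqrt (\sum_(i < d) (x 0 i - y 0 i) ^+ 2).

Definition regular_simplex {R : realType} {d : nat} (v : 'I_d.+1 -> 'rV[R]_d) : Prop :=
  forall i j : 'I_d.+1, i != j -> edist (v i) (v j) = 1.

Definition diam {R : realType} {d : nat} (A : set 'rV[R]_d) : R :=
  sup [set r | exists x y, A x /\ A y /\ r = edist x y].

Definition hexcess {R : realType} {d : nat} (A B : set 'rV[R]_d) : R :=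
  sup [set r | exists a, A a /\ r = inf [set s | exists b, B b /\ s = edist a b]].

Definition dist_H {R : realType} {d : nat} (A B : set 'rV[R]_d) : R :=
  Num.max (hexcess A B) (hexcess B A).

(* Main.v *)
Require Import Defs.
From mathcomp Require Import all_boot all_order all_algebra.
From mathcomp Require Import all_classical all_reals.
From mathcomp Require Import ring lra.
Import Order.TTheory GRing.Theory Num.Theory.
Local Open Scope ring_scope.

Section Dot.
Context {R : realType} {d : nat}.
Implicit Types x y z : 'rV[R]_d.

Definition dot x y : R := \sum_(i < d) x 0 i * y 0 i.
Definition nrm2 x : R := dot x x.

Lemma dotC x y : dot x y = dot y x.
Proof. by apply: eq_bigr => i _; rewrite mulrC. Qed.

Lemma dotDl x y z : dot (x + y) z = dot x z + dot y z.
Proof. by rewrite /dot -big_split; apply: eq_bigr => i _; rewrite mxE mulrDl. Qed.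

Lemma dotNl x y : dot (- x) y = - dot x y.
Proof. by rewrite /dot -sumrN; apply: eq_bigr => i _; rewrite mxE mulNr. Qed.

Lemma dotZl a x y : dot (a *: x) y = a * dot x y.
Proof. by rewrite /dot mulr_sumr; apply: eq_bigr => i _; rewrite mxE mulrA. Qed.

Lemma dotBl x y z : dot (x - y) z = dot x z - dot y z.
Proof. by rewrite dotDl dotNl. Qed.

Lemma dotDr x y z : dot x (y + z) = dot x y + dot x z.
Proof. by rewrite dotC dotDl !(dotC x). Qed.

Lemma dotBr x y z : dot x (y - z) = dot x y - dot x z.
Proof. by rewrite dotC dotBl !(dotC x). Qed.

Lemma dotZr a x y : dot x (a *: y) = a * dot x y.
Proof. by rewrite dotC dotZl dotC. Qed.

Lemma dot0l x : dot 0 x = 0.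
Proof. by rewrite /dot big1 // => i _; rewrite mxE mul0r. Qed.

Lemma dot_suml (I : finType) (P : pred I) (F : I -> 'rV[R]_d) z :
  dot (\sum_(i | P i) F i) z = \sum_(i | P i) dot (F i) z.
Proof.
rewrite /dot exchange_big /=; apply: eq_bigr => j _.
by rewrite summxE mulr_suml.
Qed.

Lemma dot_sumr (I : finType) (P : pred I) (F : I -> 'rV[R]_d) z :
  dot z (\sum_(i | P i) F i) = \sum_(i | P i) dot z (F i).
Proof. by rewrite dotC dot_suml; apply: eq_bigr => i _; rewrite dotC. Qed.

Lemma nrm2_ge0 x : 0 <= nrm2 x.
Proof. by apply: sumr_ge0 => i _; rewrite -expr2 sqr_ge0. Qed.

Lemma nrm2B x y : nrm2 (x - y) = nrm2 x + nrm2 y - 2 * dot x y.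
Proof. rewrite /nrm2 dotBl !dotBr (dotC y x); ring. Qed.

Lemma nrm2D x y : nrm2 (x + y) = nrm2 x + nrm2 y + 2 * dot x y.
Proof. rewrite /nrm2 dotDl !dotDr (dotC y x); ring. Qed.

Lemma nrm2N x : nrm2 (- x) = nrm2 x.
Proof. by rewrite /nrm2 dotNl dotC dotNl opprK. Qed.

Lemma nrm2_sym x y : nrm2 (x - y) = nrm2 (y - x).
Proof. by rewrite -opprB nrm2N. Qed.

Lemma nrm2_tri x y : nrm2 (x + y) <= 2 * nrm2 x + 2 * nrm2 y.
Proof.
rewrite nrm2D; have := nrm2_ge0 (x - y); rewrite nrm2B; lra.
Qed.

Lemma edistE x y : edist x y = Num.sqrt (nrm2 (x - y)).
Proof.
rewrite /edist /nrm2 /dot; congr Num.sqrt; apply: eq_bigr => i _.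
by rewrite !mxE expr2.
Qed.

Lemma edist_ge0 x y : 0 <= edist x y.
Proof. by rewrite edistE sqrtr_ge0. Qed.

Lemma nrm2_edist x y : nrm2 (x - y) = edist x y ^+ 2.
Proof. by rewrite edistE sqr_sqrtr // nrm2_ge0. Qed.


Lemma sum_nrm2_pairs n (q : 'I_n -> 'rV[R]_d) :
  \sum_j \sum_l nrm2 (q j - q l) =
  2 * n%:R * \sum_j nrm2 (q j) - 2 * nrm2 (\sum_j q j).
Proof.
transitivity (\sum_j (nrm2 (q j) *+ n + \sum_l nrm2 (q l) - 2 * dot (q j) (\sum_l q l))).
  apply: eq_bigr => j _; rewrite dot_sumr mulr_sumr.
  have -> : nrm2 (q j) *+ n = \sum_(l < n) nrm2 (q j) by rewrite sumr_const card_ord.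
  rewrite -big_split -sumrB.
  by apply: eq_bigr => l _; rewrite nrm2B.
rewrite sumrB big_split /= sumr_const card_ord sumrMnl.
rewrite /nrm2 -mulr_sumr -dot_suml mulr_natr; ring.
Qed.

Lemma sum_const_neq n (j : 'I_n) (c : R) : \sum_(l | l != j) c = c *+ n.-1.
Proof. by rewrite -[in RHS](card_ord n) -(cardC1 j) -sumr_const. Qed.


Lemma dot0r x : dot x 0 = 0.
Proof. by rewrite dotC dot0l. Qed.

Lemma nrm20 : nrm2 0 = 0.
Proof. by rewrite /nrm2 dot0l. Qed.

Lemma dot_mx x y : dot x y = (x *m y^T) 0 0.
Proof. by rewrite !mxE; apply: eq_bigr => i _; rewrite !mxE. Qed.

Lemma sum_sq_le n (f : 'I_n -> R) M : (forall k, 0 <= f k <= M) ->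
  \sum_k f k ^+ 2 <= M * \sum_k f k.
Proof.
move=> H; rewrite mulr_sumr; apply: ler_sum => k _; rewrite expr2.
by have /andP[H1 H2] := H k; apply: ler_wpM2r.
Qed.

Lemma le_sum_term n (f : 'I_n -> R) j : (forall k, 0 <= f k) -> f j <= \sum_k f k.
Proof.
move=> H; rewrite (bigD1 j) //= lerDl; exact: sumr_ge0.
Qed.

Lemma sum_le_const_neq n (f : 'I_n -> R) j M : (forall k, k != j -> f k <= M) ->
  \sum_(k | k != j) f k <= M *+ n.-1.
Proof.
move=> H; rewrite -(@sum_const_neq n j M); exact: ler_sum.
Qed.

Lemma sum_nrm2_row n (q : 'I_n -> 'rV[R]_d) j :
  \sum_l nrm2 (q j - q l) = n%:R * nrm2 (q j) + \sum_l nrm2 (q l) - 2 * dot (q j) (\sum_l q l).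
Proof.
transitivity (\sum_l (nrm2 (q j) + nrm2 (q l) - 2 * dot (q j) (q l))).
  by apply: eq_bigr => l _; rewrite nrm2B.
by rewrite [n%:R * _]mulr_natl sumrB big_split /= sumr_const card_ord dot_sumr -mulr_sumr.
Qed.

End Dot.

Section Scal.
Context {R : realType}.

Lemma scal_up (N u e S2 : R) : 1 <= N -> 0 <= e ->
  let r2 := (N - 1) / (2 * N) in let rho := r2 + u in
  let L := (rho + r2 - 1 - e) / 2 in
  S2 = rho / 2 + N * L ^+ 2 -> S2 <= (N * L) ^+ 2 -> L <= 0 -> u <= e.
Proof.
move=> HN He r2 rho L HS HS2 HL.
have HN0 : N != 0 by rewrite gt_eqF //; lra.
set m := - (2 * N * L).
have Hm : m = 1 - N * (u - e) by rewrite /m /L /rho /r2; field.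
have Hm0 : 0 <= m by rewrite /m; nra.
have Hk : (N - 1) + 2 * N * u <= (N - 1) * m ^+ 2.
  have E1 : (N - 1) + 2 * N * u = 2 * N * rho by rewrite /rho /r2; field.
  have E2 : (N - 1) * m ^+ 2 = 2 * N * (2 * (N ^+ 2 - N) * L ^+ 2) by rewrite /m; ring.
  rewrite E1 E2; apply: ler_wpM2l; first lra.
  move: HS2; rewrite HS; nra.
rewrite leNgt; apply/negP => Hue.
have Hm1 : m < 1 by rewrite Hm; nra.
have Hm2 : m ^+ 2 <= 1 by nra.
have Hm3 : (N - 1) * m ^+ 2 <= N - 1 by nra.
have : N * u <= 0 by lra.
nra.
Qed.

Lemma scal_rough (N u e S2 g : R) : 1 <= N -> 0 <= e ->
  - ((N - 1) * e) <= u -> u <= e ->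
  let r2 := (N - 1) / (2 * N) in let rho := r2 + u in
  let L := (rho + r2 - 1 - e) / 2 in let T := - (N * L) in
  S2 = rho / 2 + N * L ^+ 2 -> S2 <= g * T ->
  rho + r2 - 2 * (L + g) <= (N ^+ 2 - 1) * e + N ^+ 2 * e ^+ 2.
Proof.
move=> HN He Hu1 Hu2 r2 rho L T HS HS2.
have HN0 : N != 0 by rewrite gt_eqF //; lra.
have HX : (1 + e) * (2 * T) - 4 * S2 = N * (e - u) - e + N * u * (e - u).
  by rewrite HS /T /L /rho /r2; field.
have HT : 2 * T = 1 + N * (e - u) by rewrite /T /L /rho /r2; field.
have HZ : rho + r2 - 2 * (L + g) = 1 + e - 2 * g by rewrite /L; field.
have key : (rho + r2 - 2 * (L + g)) * (2 * T) <= N * (e - u) - e + N * u * (e - u).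
  rewrite HZ -HX; nra.
have HB1 : N * (e - u) - e <= (N ^+ 2 - 1) * e by nra.
have HB2 : N * u * (e - u) <= N ^+ 2 * e ^+ 2.
  case: (lerP 0 u) => Hu0; last by nra.
  have : u * (e - u) <= e * e by nra.
  nra.
have HT1 : 1 <= 2 * T by rewrite HT; nra.
set Z := rho + r2 - 2 * (L + g) in key *.
case: (lerP 0 Z) => HZ0; nra.
Qed.

End Scal.

Section Simplex.
Variables (R : realType) (d : nat) (v : 'I_d.+1 -> 'rV[R]_d).
Hypothesis Hv : regular_simplex v.

Definition NN : R := (d.+1)%:R.
Lemma NN_gt0 : 0 < NN. Proof. by rewrite /NN ltr0n. Qed.
Lemma NN_neq0 : NN != 0. Proof. by rewrite gt_eqF // NN_gt0. Qed.
Lemma NNE : NN = d%:R + 1. Proof. by rewrite /NN -natr1. Qed.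
Lemma d1_neq0 : 1 + d%:R != 0 :> R.
Proof. by rewrite addrC -NNE NN_neq0. Qed.
Ltac fld := field; rewrite ?d1_neq0 ?NN_neq0 ?mulf_neq0 ?d1_neq0 ?NN_neq0 ?pnatr_eq0 //.

Definition ctr : 'rV[R]_d := NN^-1 *: \sum_k v k.
Definition pv k := v k - ctr.

Lemma nrm2_vv i j : i != j -> nrm2 (v i - v j) = 1.
Proof. by move=> /Hv H; rewrite nrm2_edist H expr1n. Qed.

Lemma pvB i j : pv i - pv j = v i - v j.
Proof. by rewrite /pv opprB addrA subrK. Qed.

Lemma sum_pv : \sum_k pv k = 0.
Proof.
rewrite /pv sumrB sumr_const card_ord /ctr -scaler_nat scalerA.
by rewrite -[(d.+1)%:R]/NN mulfV ?NN_neq0 // scale1r subrr.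
Qed.

Lemma row_vv j : \sum_l nrm2 (v j - v l) = d%:R.
Proof.
rewrite (bigD1 j) //= subrr nrm20 add0r.
rewrite (eq_bigr (fun _ => 1)) ?sum_const_neq //= ?mulr1n //.
by move=> l Hl; rewrite nrm2_vv // eq_sym.
Qed.

Lemma sum_nrm2_pv : \sum_k nrm2 (pv k) = d%:R / 2.
Proof.
have := sum_nrm2_pairs _ pv.
under eq_bigr => j _ do under eq_bigr => l _ do rewrite pvB.
under eq_bigr => j _ do rewrite row_vv.
rewrite sum_pv nrm20 sumr_const card_ord -[(d.+1)%:R]/NN => H.
have HN := NN_neq0.
move: H; set S := \sum_k nrm2 (pv k) => H.
have E : d%:R *+ d.+1 = d%:R * NN :> R by rewrite /NN mulrnAr mulr1.
rewrite E mulr0 subr0 in H.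
have H2 : S = (2 * NN * S) / (2 * NN) by fld.
rewrite H2 -H; fld.
Qed.

Lemma nrm2_pv k : nrm2 (pv k) = d%:R / (2 * NN).
Proof.
have := sum_nrm2_row _ pv k.
under eq_bigr => l _ do rewrite pvB.
rewrite row_vv sum_nrm2_pv sum_pv dot0r -[(d.+1)%:R]/NN => H.
have HN := NN_neq0.
have E : NN * nrm2 (pv k) = d%:R - d%:R / 2 by rewrite {1}H; ring.
apply: (mulfI HN); rewrite E; fld.
Qed.

Lemma dot_pv j k : j != k -> dot (pv j) (pv k) = - (2 * NN)^-1.
Proof.
move=> Hjk; have := nrm2B (pv j) (pv k); rewrite pvB nrm2_vv // !nrm2_pv NNE => H.
have HN : d%:R + 1 != 0 :> R by rewrite -NNE NN_neq0.
have -> : dot (pv j) (pv k) = ((d%:R / (2 * (d%:R + 1))) * 2 - 1) / 2 by lra.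
by fld.
Qed.


Definition uu (i : 'I_d) := v (lift ord0 i) - v ord0.
Definition Umx : 'M[R]_d := \matrix_(i, j) uu i 0 j.
Definition Jm : 'M[R]_d := const_mx 1.

Lemma dot_uu i j : dot (uu i) (uu j) = 2^-1 * (1 + (i == j)%:R).
Proof.
have H := nrm2B (uu i) (uu j).
have Hi : forall i, nrm2 (uu i) = 1 by move=> i'; rewrite nrm2_vv // neq_lift.
have E : uu i - uu j = v (lift ord0 i) - v (lift ord0 j) by rewrite /uu opprB addrA subrK.
rewrite E in H.
case: (eqVneq i j) => [<-|Hij].
  by rewrite /= -/(nrm2 _) Hi; field.
move: H; rewrite nrm2_vv; last by rewrite (inj_eq (@lift_inj _ ord0)).
rewrite !Hi /= => H; lra.
Qed.

Lemma UUt : Umx *m Umx^T = 2^-1 *: (1%:M + Jm).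
Proof.
apply/matrixP => i j; rewrite !mxE addrC -(dot_uu i j) /dot.
by apply: eq_bigr => k _; rewrite !mxE.
Qed.

Lemma JJ : Jm *m Jm = d%:R *: Jm.
Proof.
apply/matrixP => i j; rewrite !mxE (eq_bigr (fun _ => 1)) ?sumr_const ?card_ord ?mulr1 //.
by move=> k _; rewrite !mxE mulr1.
Qed.

Definition Ginv : 'M[R]_d := 2 *: (1%:M - NN^-1 *: Jm).

Lemma G_Ginv : (2^-1 *: (1%:M + Jm)) *m Ginv = 1%:M.
Proof.
rewrite /Ginv -scalemxAl -scalemxAr scalerA mulVf ?pnatr_eq0 // scale1r.
rewrite mulmxDl !mulmxBr !mul1mx !mulmx1 -scalemxAr JJ scalerA.
apply/matrixP => i j; rewrite !mxE.
rewrite /NN; fld.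
Qed.

Lemma frameU y : nrm2 y =
  2 * (\sum_i dot y (uu i) ^+ 2 - NN^-1 * (\sum_i dot y (uu i)) ^+ 2).
Proof.
have H1 : Umx *m (Umx^T *m Ginv) = 1%:M by rewrite mulmxA UUt G_Ginv.
have H2 := mulmx1C H1.
set a := y *m Umx^T.
have Ha : forall i, a 0 i = dot y (uu i).
  by move=> i; rewrite !mxE; apply: eq_bigr => k _; rewrite !mxE.
have E : y *m y^T = a *m Ginv *m a^T.
  have Ey : y = y *m (Umx^T *m Ginv *m Umx) by rewrite H2 mulmx1.
  by rewrite {1}Ey /a trmx_mul trmxK !mulmxA.
rewrite /nrm2 dot_mx E /Ginv -scalemxAr -scalemxAl mulmxBr mulmx1 -scalemxAr mulmxBl.
rewrite -scalemxAl !mxE.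
have Hs : forall j, (a *m Jm) 0 j = \sum_k dot y (uu k).
  by move=> j; rewrite !mxE; apply: eq_bigr => k _; rewrite [Jm _ _]mxE mulr1 Ha.
congr (2 * (_ - NN^-1 * _)).
  by apply: eq_bigr => j _; rewrite [a^T _ _]mxE Ha expr2.
under eq_bigr => j _ do rewrite Hs [a^T _ _]mxE Ha.
by rewrite -mulr_sumr expr2.
Qed.


Lemma frame y : \sum_k dot y (pv k) ^+ 2 = nrm2 y / 2.
Proof.
rewrite frameU.
have Hu : forall i, dot y (uu i) = dot y (pv (lift ord0 i)) - dot y (pv ord0).
  by move=> i; rewrite -dotBr pvB.
under [X in _ = 2 * (X - _) / 2]eq_bigr => i _ do rewrite Hu.
under [X in _ = 2 * (_ - _ * X ^+ 2) / 2]eq_bigr => i _ do rewrite Hu.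
have H0 : \sum_k dot y (pv k) = 0 by rewrite -dot_sumr sum_pv dot0r.
rewrite big_ord_recl /= in H0.
rewrite big_ord_recl /=.
set a0 := dot y (pv ord0).
set s1 := \sum_(i < d) dot y (pv (lift ord0 i)) in H0.
set s2 := \sum_(i < d) dot y (pv (lift ord0 i)) ^+ 2.
have E1 : \sum_(i < d) (dot y (pv (lift ord0 i)) - a0) = s1 - a0 * d%:R.
  by rewrite sumrB sumr_const card_ord mulr_natr.
have E2 : \sum_(i < d) (dot y (pv (lift ord0 i)) - a0) ^+ 2 = s2 - 2 * a0 * s1 + a0 ^+ 2 * d%:R.
  under eq_bigr => i _ do rewrite sqrrB.
  rewrite big_split /= sumrB sumr_const card_ord /s2 /s1 mulr_sumr mulr_natr.
  by congr (_ - _ + _); apply: eq_bigr => i _; ring.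
rewrite E2 E1 /NN.
have Hs1 : s1 = - a0 by move: H0; rewrite -/a0; lra.
rewrite Hs1; fld.
Qed.


Definition r2 : R := d%:R / (2 * NN).

Lemma r2E : r2 = (NN - 1) / (2 * NN).
Proof. by rewrite /r2 NNE addrK. Qed.

Section Point.
Variables (w : 'rV[R]_d) (e : R).
Hypothesis He : 0 <= e.
Hypothesis Hw : forall k, nrm2 (w - v k) <= 1 + e.

Let y := w - ctr.
Let rho := nrm2 y.
Let al k := dot y (pv k).
Let L := (rho + r2 - 1 - e) / 2.
Let ga k := al k - L.

Lemma nrm2_wv k : nrm2 (w - v k) = rho + r2 - 2 * al k.
Proof.
have -> : w - v k = y - pv k by rewrite /y /pv opprB addrA subrK.
by rewrite nrm2B nrm2_pv.
Qed.

Lemma ga_ge0 k : 0 <= ga k.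
Proof. have := Hw k; rewrite nrm2_wv /ga /L; lra. Qed.

Lemma sum_al : \sum_k al k = 0.
Proof. by rewrite /al -dot_sumr sum_pv dot0r. Qed.

Lemma sum_ga : \sum_k ga k = - (NN * L).
Proof.
by rewrite /ga sumrB sum_al sumr_const card_ord -mulr_natl sub0r.
Qed.

Lemma sum_ga2 : \sum_k ga k ^+ 2 = rho / 2 + NN * L ^+ 2.
Proof.
transitivity (\sum_k (al k ^+ 2 - 2 * L * al k + L ^+ 2)).
  by apply: eq_bigr => k _; rewrite /ga; ring.
rewrite big_split /= sumrB -mulr_sumr sum_al /al frame sumr_const card_ord -mulr_natl.
rewrite /rho /NN; ring.
Qed.

Lemma rho_up : rho <= r2 + e.
Proof.
have H1 := @scal_up R NN (rho - r2) e (\sum_k ga k ^+ 2).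
have HN : 1 <= NN by rewrite NNE; have := ler0n R d; lra.
have HL : L <= 0.
  have : 0 <= \sum_k ga k by apply: sumr_ge0 => k _; exact: ga_ge0.
  rewrite sum_ga; have := NN_gt0; nra.
have Hs : \sum_k ga k ^+ 2 <= (NN * L) ^+ 2.
  rewrite -sqrrN -sum_ga; apply: le_trans (sum_sq_le _ ga (\sum_k ga k) _) _.
    by move=> k; rewrite ga_ge0 /= le_sum_term // => j; exact: ga_ge0.
  by rewrite expr2.
have := H1 HN He; rewrite -r2E /= (addrC r2) subrK -/L => H2.
suff : rho - r2 <= e by lra.
by apply: H2 => //; rewrite sum_ga2.
Qed.

Lemma rough_ex : r2 - d%:R * e <= rho ->
  exists m, nrm2 (w - v m) <= (NN ^+ 2 - 1) * e + NN ^+ 2 * e ^+ 2.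
Proof.
move=> Hlo.
have [m _ Hm] := @arg_maxP _ R _ ord0 predT ga isT.
exists m.
have H1 := @scal_rough R NN (rho - r2) e (\sum_k ga k ^+ 2) (ga m).
have HN : 1 <= NN by rewrite NNE; have := ler0n R d; lra.
have Hs : \sum_k ga k ^+ 2 <= ga m * \sum_k ga k.
  apply: sum_sq_le => k; rewrite ga_ge0 /=; exact: Hm.
have Hup := rho_up.
have := H1 HN He; rewrite -r2E /= (addrC r2) subrK -/L => H2.
rewrite nrm2_wv.
have -> : al m = L + ga m by rewrite /ga; ring.
apply: H2.
- rewrite NNE addrK; lra.
- lra.
- by rewrite sum_ga2.
- by rewrite -sum_ga.
Qed.

End Point.
End Simplex.

Section Two.
Variables (R : realType) (d : nat) (v ws : 'I_d.+1 -> 'rV[R]_d).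
Hypotheses (Hv : regular_simplex v) (Hws : regular_simplex ws).
Variable e : R.
Hypothesis He : 0 <= e.
Hypothesis Hc : forall j k, nrm2 (ws j - v k) <= 1 + e.

Local Notation N := (NN R d).
Local Notation c := (ctr R d v).

Lemma sum_rho : d%:R / 2 <= \sum_j nrm2 (ws j - c).
Proof.
have H := sum_nrm2_pairs _ (fun j => ws j - c).
have E : forall j l, (ws j - c) - (ws l - c) = ws j - ws l.
  by move=> j l; rewrite opprB addrA subrK.
move: H.
under eq_bigr => j _ do under eq_bigr => l _ do rewrite E.
under eq_bigr => j _ do rewrite (row_vv _ _ _ Hws).
rewrite sumr_const card_ord -[(d.+1)%:R]/N.
have E2 : d%:R *+ d.+1 = d%:R * N :> R by rewrite /NN mulrnAr mulr1.
rewrite E2 => H.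
have := nrm2_ge0 (\sum_j (ws j - c)).
have HN := NN_gt0 R d.
set S := \sum_j nrm2 (ws j - c) in H *.
move=> H0.
have : d%:R * N <= 2 * N * S by lra.
move=> H1.
have : d%:R <= 2 * S.
  rewrite -(ler_pM2r HN); lra.
lra.
Qed.

Lemma rho_lo j : r2 R d - d%:R * e <= nrm2 (ws j - c).
Proof.
have Hup : forall l, nrm2 (ws l - c) <= r2 R d + e.
  by move=> l; apply: (rho_up _ _ _ Hv _ _ He) => k; exact: Hc.
have H := sum_rho.
rewrite (bigD1 j) //= in H.
have H2 := @sum_le_const_neq R _ (fun l => nrm2 (ws l - c)) j (r2 R d + e)
  (fun l _ => Hup l).
rewrite -mulr_natr /= in H2.
have Er : d%:R / 2 = N * r2 R d by rewrite /r2; field; rewrite ?NN_neq0 ?d1_neq0.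
rewrite Er NNE in H.
nra.
Qed.

Lemma rough_match j : exists m, nrm2 (ws j - v m) <= (N ^+ 2 - 1) * e + N ^+ 2 * e ^+ 2.
Proof.
apply: (rough_ex _ _ _ Hv _ _ He).
- by move=> k; exact: Hc.
- exact: rho_lo.
Qed.


Lemma fine_step (Rr : R) : 0 <= Rr -> Rr < 1 / 4 ->
  (forall j, exists m, nrm2 (ws j - v m) <= Rr) ->
  (forall k, exists j, nrm2 (ws j - v k) <= Rr) ->
  forall j, exists m, nrm2 (ws j - v m) <= 2 * d%:R * (e / 2 + 2 * Rr) ^+ 2.
Proof.
move=> HR0 HR1 M1 M2 j.
have [m Hm] := M1 j; exists m.
set h := ws j - v m in Hm *.
set A := e / 2 + 2 * Rr.
pose x k := dot h (pv R d v k).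
pose a k := dot h (v m - v k).
have Ha : forall k, a k = x m - x k by move=> k; rewrite /a /x -dotBr pvB.
have Hsx : \sum_k x k = 0 by rewrite /x -dot_sumr sum_pv dot0r.
have Hfr : \sum_k x k ^+ 2 = nrm2 h / 2 := frame _ _ _ Hv h.
have Hxa : \sum_k x k ^+ 2 <= \sum_k a k ^+ 2.
  have -> : \sum_k a k ^+ 2 = \sum_k (x m ^+ 2 - 2 * x m * x k + x k ^+ 2).
    by apply: eq_bigr => k _; rewrite Ha; ring.
  rewrite big_split /= sumrB -[\sum_(i < d.+1) 2 * x m * x i]mulr_sumr Hsx sumr_const card_ord.
  have := sqr_ge0 (x m); rewrite -mulr_natr; have := ler0n R d.+1; nra.
have Hak : forall k, k != m -> a k ^+ 2 <= A ^+ 2.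
  move=> k Hkm.
  have Hmk : nrm2 (v m - v k) = 1 by rewrite (nrm2_vv _ _ _ Hv) // eq_sym.
  have Hup : a k <= e / 2.
    have := Hc j k.
    have -> : ws j - v k = h + (v m - v k) by rewrite /h; apply/rowP => i; rewrite !mxE; ring.
    rewrite nrm2D Hmk -/(a k); have := nrm2_ge0 h; lra.
  have [j' Hj'] := M2 k.
  set h' := ws j' - v k in Hj'.
  have Hjj : j' != j.
    apply/negP => /eqP Ej.
    have : nrm2 (v m - v k) <= 4 * Rr.
      have -> : v m - v k = h' + (- h) by rewrite /h' /h Ej; apply/rowP => i; rewrite !mxE; ring.
      apply: le_trans (nrm2_tri _ _) _; rewrite nrm2N; lra.
    rewrite Hmk; lra.
  have H1 : nrm2 (ws j - ws j') = 1 by rewrite (nrm2_vv _ _ _ Hws) // eq_sym.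
  have E1 : ws j - ws j' = (v m - v k) + (h - h').
    by rewrite /h /h'; apply/rowP => i; rewrite !mxE; ring.
  rewrite E1 nrm2D Hmk dotDr dotC -/(a k) in H1.
  have H2 := Hc j' m.
  have E2 : ws j' - v m = h' - (v m - v k) by rewrite /h'; apply/rowP => i; rewrite !mxE; ring.
  rewrite E2 nrm2B Hmk in H2.
  have H3 : nrm2 (h - h') <= 4 * Rr.
    apply: le_trans (nrm2_tri _ _) _; rewrite nrm2N; lra.
  have Hh0 := nrm2_ge0 h'.
  rewrite (dotC (v m - v k) (- h')) dotNl in H1.
  have Hlo : - A <= a k by rewrite /A; lra.
  have Hup' : a k <= A by rewrite /A; lra.
  nra.
have Hsa : \sum_k a k ^+ 2 <= A ^+ 2 *+ d.
  rewrite (bigD1 m) //= /a subrr dot0r expr0n /= add0r.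
  exact: sum_le_const_neq.
have : nrm2 h <= 2 * \sum_k a k ^+ 2 by lra.
rewrite -mulr_natr in Hsa; nra.
Qed.

End Two.

Section Num.
Context {R : realType}.
Implicit Types b K e D x y q r : R.

Lemma mul_le x1 x2 y1 y2 : 0 <= x1 -> 0 <= y1 -> x1 <= x2 -> y1 <= y2 -> x1 * y1 <= x2 * y2.
Proof. exact: ler_pM. Qed.

Lemma sq_le {x y} : 0 <= x -> x <= y -> x ^+ 2 <= y ^+ 2.
Proof. by move=> H0 H1; rewrite !expr2; apply: ler_pM. Qed.

Lemma numA q K b : 16 <= q -> 4 <= K -> 0 <= b ->
  b * (q * (q * q) * (q * q) * (K * (K * K))) < 1 ->
  [/\ b <= 1 / 4, K * b * 16 <= 1 / 256 & 64 * (q * q * (K * (K * K) * b)) <= 1 / 16].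
Proof.
move=> Hq HK Hb Hbd.
pose q2 := q * q; pose q4 := q2 * q2; pose t := K * (K * K) * b.
have Hq2 : 256 <= q2 by have := @mul_le 16 q 16 q ltac:(lra) ltac:(lra) Hq Hq; rewrite /q2; lra.
have Hq4 : 256 * q2 <= q4 by rewrite /q4; apply: ler_wpM2r; lra.
have HKK : 16 <= K * K by have := @mul_le 4 K 4 K ltac:(lra) ltac:(lra) HK HK; lra.
have HK3 : 64 <= K * (K * K) by have := @mul_le 4 K 16 (K * K) ltac:(lra) ltac:(lra) HK HKK; lra.
have Ht0 : 0 <= t by rewrite /t; apply: mulr_ge0 => //; lra.
have Hqt : q * t * q4 < 1 by move: Hbd; rewrite /t /q4 /q2; congr (_ < _); ring.
have Hqt0 : 0 <= q * t by apply: mulr_ge0 => //; lra.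
have Hqt16 : q * t <= 1 / 16.
  have : q * t * 16 <= q * t * q4 by apply: ler_wpM2l => //; lra.
  lra.
have H4t : q4 * t <= 1 / 16.
  have E : q * t * q4 = q4 * t * q by ring.
  have : q4 * t * 16 <= q4 * t * q.
    apply: ler_wpM2l => //; apply: mulr_ge0 => //; lra.
  lra.
have Hbt : b * 64 <= t by rewrite /t mulrC; apply: ler_wpM2r.
have Ht1 : t <= 1 / 256.
  have : t * 16 <= q * t by rewrite mulrC; apply: ler_wpM2r.
  lra.
have HKb : K * b * 16 <= t.
  have -> : t = K * b * (K * K) by rewrite /t; ring.
  apply: ler_wpM2l => //; apply: mulr_ge0 => //; lra.
split; first lra; first lra.
have Hq2t0 : 0 <= q2 * t by apply: mulr_ge0 => //; lra.
have Ha : 64 * q2 <= q4 by lra.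
have Hb' : 64 * q2 * t <= q4 * t by apply: ler_wpM2r.
rewrite -/t -/q2; lra.
Qed.

Lemma numB K b e r : 4 <= K -> 0 <= b -> b <= 1 / 4 -> K * b * 16 <= 1 / 256 ->
  e = 2 * b + b ^+ 2 -> r = (K - 1) * e + K * e ^+ 2 ->
  [/\ 0 <= e, e <= 3 * b, 0 <= r, r <= 12 * (K * b) & r < 1 / 4].
Proof.
move=> HK Hb Hb4 HKb -> ->.
have Hbb : b ^+ 2 <= b / 4 by rewrite expr2; have := ler_wpM2l Hb Hb4; lra.
have Hb2 : 0 <= b ^+ 2 by apply: sqr_ge0.
have He0 : 0 <= 2 * b + b ^+ 2 by lra.
have He3 : 2 * b + b ^+ 2 <= 3 * b by lra.
have He2 : (2 * b + b ^+ 2) ^+ 2 <= 9 * b.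
  have H := sq_le He0 He3.
  have E : (3 * b) ^+ 2 = 9 * b ^+ 2 by ring.
  lra.
have H1 : (K - 1) * (2 * b + b ^+ 2) <= K * (3 * b) by apply: mul_le => //; lra.
have H2 : K * (2 * b + b ^+ 2) ^+ 2 <= K * (9 * b) by apply: ler_wpM2l => //; lra.
have H3 : 0 <= (K - 1) * (2 * b + b ^+ 2) by apply: mulr_ge0; lra.
have H4 : 0 <= K * (2 * b + b ^+ 2) ^+ 2 by apply: mulr_ge0; [lra | exact: sqr_ge0].
split; lra.
Qed.

Lemma numC q K D b e r s : 16 <= q -> 4 <= K -> 1 <= D -> D <= K -> 0 <= b -> b <= 1 / 4 ->
  64 * (q * q * (K * (K * K) * b)) <= 1 / 16 ->
  0 <= e -> e <= 3 * b -> 0 <= r -> r <= 12 * (K * b) ->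
  s = 2 * D * (e / 2 + 2 * r) ^+ 2 ->
  [/\ 0 <= s, s < 1 / 4 & s <= b / 16].
Proof.
move=> Hq HK HD1 HDK Hb Hb4 H64 He0 He3 Hr0 Hr ->.
have HKb0 : 0 <= K * b by apply: mulr_ge0 => //; lra.
have HA0 : 0 <= e / 2 + 2 * r by lra.
have HA0b : e / 2 + 2 * r <= 2 * q * (K * b).
  have : 16 * (K * b) <= q * (K * b) by apply: ler_wpM2r.
  have : b <= K * b by rewrite -[X in X <= _]mul1r; apply: ler_wpM2r => //; lra.
  lra.
have H1 := sq_le HA0 HA0b.
have H2 : 2 * D * (e / 2 + 2 * r) ^+ 2 <= 2 * K * (2 * q * (K * b)) ^+ 2.
  apply: mul_le => //; try lra; exact: sqr_ge0.
have E : 2 * K * (2 * q * (K * b)) ^+ 2 = 8 * (q * q * (K * (K * K) * b)) * b by ring.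
have Hx0 : 0 <= q * q * (K * (K * K) * b).
  apply: mulr_ge0; first by apply: mulr_ge0; lra.
  apply: mulr_ge0 => //; apply: mulr_ge0; first lra; apply: mulr_ge0; lra.
have H3 : 8 * (q * q * (K * (K * K) * b)) * b <= b / 16.
  have : 8 * (q * q * (K * (K * K) * b)) <= 1 / 16 by lra.
  move=> H; have := ler_wpM2r Hb H; lra.
have H0 : 0 <= 2 * D * (e / 2 + 2 * r) ^+ 2 by apply: mulr_ge0; [lra | exact: sqr_ge0].
split; lra.
Qed.

Lemma numD K D b e s : 4 <= K -> 1 <= D -> 0 <= b -> b <= 1 / 4 ->
  e = 2 * b + b ^+ 2 -> 0 <= s -> s <= b / 16 ->
  2 * D * (e / 2 + 2 * s) ^+ 2 <= K * D ^+ 4 * b ^+ 2.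
Proof.
move=> HK HD1 Hb Hb4 -> Hs0 Hs.
have Hbb : b ^+ 2 <= b / 4 by rewrite expr2; have := ler_wpM2l Hb Hb4; lra.
have Hb2 : 0 <= b ^+ 2 by apply: sqr_ge0.
have HA1 : 0 <= (2 * b + b ^+ 2) / 2 + 2 * s by lra.
have HA1b : (2 * b + b ^+ 2) / 2 + 2 * s <= 11 / 8 * b by lra.
have H1 := sq_le HA1 HA1b.
have H2 : 2 * D * ((2 * b + b ^+ 2) / 2 + 2 * s) ^+ 2 <= 2 * D * (11 / 8 * b) ^+ 2.
  apply: ler_wpM2l => //; lra.
have E : 2 * D * (11 / 8 * b) ^+ 2 = (121 / 32) * (D * b ^+ 2) by field.
have HD4 : D <= D ^+ 4.
  have HDD : 1 <= D * D by have := @mul_le 1 D 1 D ltac:(lra) ltac:(lra) HD1 HD1; lra.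
  have : D * 1 <= D * (D * (D * D)).
    apply: ler_wpM2l; first lra.
    have := @mul_le 1 D 1 (D * D) ltac:(lra) ltac:(lra) HD1 HDD; lra.
  by rewrite !exprS expr0 mulr1; lra.
have H3 : 4 * D <= K * D ^+ 4 by apply: mul_le => //; lra.
have H4 : 4 * D * b ^+ 2 <= K * D ^+ 4 * b ^+ 2 by apply: ler_wpM2r.
have H5 : 0 <= D * b ^+ 2 by apply: mulr_ge0 => //; lra.
lra.
Qed.

End Num.

Local Open Scope classical_set_scope.

Section Final.
Variables (R : realType) (d : nat).

Lemma sqrt_le1 (t : R) : 0 <= t -> Num.sqrt t <= 1 + t.
Proof.
move=> Ht; have Hs := sqr_sqrtr Ht; have Hs0 := sqrtr_ge0 t.
have := sqr_ge0 (1 - Num.sqrt t); rewrite sqrrB Hs expr1n mul1r; lra.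
Qed.

Lemma diam_pair (v w : 'I_d.+1 -> 'rV[R]_d) (x y : 'rV[R]_d) :
  (range v `|` range w) x -> (range v `|` range w) y ->
  edist x y <= diam (range v `|` range w).
Proof.
move=> Hx Hy; apply: ub_le_sup; last by exists x, y.
pose B := \sum_i (nrm2 (v i) + nrm2 (w i)).
have HB : forall z, (range v `|` range w) z -> nrm2 z <= B.
  have Hnn : forall i, 0 <= nrm2 (v i) + nrm2 (w i) by move=> i; apply: addr_ge0; exact: nrm2_ge0.
  move=> z [[i _ <-]|[i _ <-]];
    have := le_sum_term _ (fun i => nrm2 (v i) + nrm2 (w i)) i Hnn;
    rewrite /= -/B; have := nrm2_ge0 (v i); have := nrm2_ge0 (w i); lra.
exists (1 + 4 * B) => r [a [b [Ha [Hb ->]]]].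
rewrite edistE; have := @sqrt_le1 _ (nrm2_ge0 (a - b)).
have := nrm2_tri a (- b); rewrite nrm2N.
have := HB a Ha; have := HB b Hb; lra.
Qed.


Lemma edist_le (x y : 'rV[R]_d) X : 0 <= X -> nrm2 (x - y) <= X ^+ 2 -> edist x y <= X.
Proof.
move=> HX H; rewrite edistE -(ger0_norm HX) -sqrtr_sqr; exact: ler_wsqrtr.
Qed.

Lemma hex_le (A B : 'I_d.+1 -> 'rV[R]_d) X : 0 <= X ->
  (forall k, exists j, nrm2 (A k - B j) <= X ^+ 2) -> hexcess (range A) (range B) <= X.
Proof.
move=> HX H; apply: ge_sup.
  by exists (inf [set s | exists b, range B b /\ s = edist (A ord0) b]), (A ord0); split => //; exists ord0.
move=> r [a [[k _ <-] ->]].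
have [j Hj] := H k.
have Hlb : has_lbound [set s | exists b, range B b /\ s = edist (A k) b].
  by exists 0 => s [b [_ ->]]; exact: edist_ge0.
have Hin : [set s | exists b, range B b /\ s = edist (A k) b] (edist (A k) (B j)).
  by exists (B j); split => //; exists j.
apply: le_trans (ge_inf Hlb Hin) _.
exact: edist_le.
Qed.

End Final.

Theorem mainTheorem5 (R : realType) (d : nat) : (1 <= d)%N ->
  exists beta_d : R, 0 < beta_d /\
    forall (v w : 'I_d.+1 -> 'rV[R]_d) (beta : R),
      regular_simplex v -> regular_simplex w ->
      0 <= beta -> beta < beta_d ->
      diam (range v `|` range w) <= 1 + beta ->
      dist_H (range v) (range w) <= ((d.+1 * d ^ 2)%N)%:R * beta.
Proof.
move=> Hd1.
pose N := NN R d; pose K := N ^+ 2.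
have HN : N = d%:R + 1 := NNE R d.
have HD1 : (1 : R) <= d%:R by rewrite ler1n.
have HK : 4 <= K.
  rewrite /K expr2; have := @mul_le R 2 N 2 N ltac:(lra) ltac:(lra) ltac:(lra) ltac:(lra); lra.
have HDK : d%:R <= K.
  rewrite /K expr2; have := @mul_le R 1 N (d%:R) N ltac:(lra) ltac:(lra) ltac:(lra) ltac:(lra); lra.
pose P := 16 * (16 * 16) * (16 * 16) * (K * (K * K)).
have HP : 0 < P.
  have HK0 : 0 < K by lra.
  by rewrite /P !mulr_gt0.
exists (1 / P); split; first by rewrite divr_gt0.
move=> v w beta Hv Hw Hb0 Hbd Hdiam.
have Hbd' : beta * P < 1 by rewrite -ltr_pdivlMr.
pose e := 2 * beta + beta ^+ 2.
have Hc : forall j k, nrm2 (w j - v k) <= 1 + e.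
  move=> j k; rewrite nrm2_edist.
  have H : edist (w j) (v k) <= 1 + beta.
    apply: le_trans Hdiam; apply: diam_pair; [by right; exists j | by left; exists k].
  have := sq_le (edist_ge0 (w j) (v k)) H.
  have -> : (1 + beta) ^+ 2 = 1 + e by rewrite /e; ring.
  by [].
have Hc' : forall j k, nrm2 (v j - w k) <= 1 + e by move=> j k; rewrite nrm2_sym.
have [Hb4 HKb H64] := @numA R 16 K beta ltac:(lra) HK Hb0 Hbd'.
pose R0 := (K - 1) * e + K * e ^+ 2.
have [He0 He3 HR00 HR0b HR0q] := @numB R K beta e R0 HK Hb0 Hb4 HKb (erefl e) (erefl R0).
pose R1 := 2 * d%:R * (e / 2 + 2 * R0) ^+ 2.
have [HR10 HR1q HR1b] := @numC R 16 K d%:R beta e R0 R1 ltac:(lra) HK HD1 HDK Hb0 Hb4 H64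
  He0 He3 HR00 HR0b (erefl R1).
pose R2 := 2 * d%:R * (e / 2 + 2 * R1) ^+ 2.
have HR2 : R2 <= K * d%:R ^+ 4 * beta ^+ 2 := @numD R K d%:R beta e R1 HK HD1 Hb0 Hb4 (erefl e) HR10 HR1b.
have sym : forall (A B : 'I_d.+1 -> 'rV[R]_d) (r : R),
    (forall j, exists m, nrm2 (A j - B m) <= r) -> forall k, exists j, nrm2 (B j - A k) <= r.
  by move=> A B r H k; have [j Hj] := H k; exists j; rewrite nrm2_sym.
have M0vw : forall j, exists m, nrm2 (w j - v m) <= R0 := @rough_match R d v w Hv Hw e He0 Hc.
have M0wv : forall j, exists m, nrm2 (v j - w m) <= R0 := @rough_match R d w v Hw Hv e He0 Hc'.
have M1vw : forall j, exists m, nrm2 (w j - v m) <= R1 :=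
  @fine_step R d v w Hv Hw e Hc R0 HR00 HR0q M0vw (sym _ _ _ M0wv).
have M1wv : forall j, exists m, nrm2 (v j - w m) <= R1 :=
  @fine_step R d w v Hw Hv e Hc' R0 HR00 HR0q M0wv (sym _ _ _ M0vw).
have M2vw : forall j, exists m, nrm2 (w j - v m) <= R2 :=
  @fine_step R d v w Hv Hw e Hc R1 HR10 HR1q M1vw (sym _ _ _ M1wv).
have M2wv : forall j, exists m, nrm2 (v j - w m) <= R2 :=
  @fine_step R d w v Hw Hv e Hc' R1 HR10 HR1q M1wv (sym _ _ _ M1vw).
set X := ((d.+1 * d ^ 2)%N)%:R * beta.
have HX0 : 0 <= X by rewrite /X; apply: mulr_ge0.
have HX2 : X ^+ 2 = K * d%:R ^+ 4 * beta ^+ 2.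
  by rewrite /X natrM natrX /K /N /NN; ring.
rewrite /dist_H ge_max; apply/andP; split.
- apply: hex_le => // k; have [j Hj] := M2wv k; exists j; rewrite HX2; lra.
- apply: hex_le => // k; have [j Hj] := M2vw k; exists j; rewrite HX2; lra.
Qed.
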